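(* Let $H_\varepsilon=T_\varepsilon+V_\varepsilon$ be as in the context. For $x\in(\varepsilon\mathbb Z)^d$ and $R>0$ let $B_x(R):=\{y\in(\varepsilon\mathbb Z)^d:|x-y|<R\}$ and $$\Lambda_R(x,H_\varepsilon):=\inf\Big\{\frac{\langle H_\varepsilon\phi,\phi\rangle}{\|\phi\|^2_{\ell^2}}:\ \phi\in c_0(B_x(R)),\ \phi\ne0\Big\}.$$ Then for every $\delta>0$ there is $R_\delta>0$ such that for all $R>R_\delta$ and all $\phi\in c_0((\varepsilon\mathbb Z)^d)$, $$\langle H_\varepsilon\phi,\phi\rangle\ge\sum_{x\in(\varepsilon\mathbb Z)^d}\big(\Lambda_R(x,H_\varepsilon)-\delta\big)|\phi(x)|^2.$$
   Context: Let $d\ge1$, $\varepsilon\in(0,1]$, $\ell^2((\varepsilon\mathbb Z)^d)$ with $\langle u,v\rangle=\sum_x\bar u(x)v(x)$, $(\tau_\gamma u)(x)=u(x+\gamma)$. For $D\subset(\varepsilon\mathbb Z)^d$, $c_0(D)$ is the space of real-valued functions on $(\varepsilon\mathbb Z)^d$ with finite support contained in $D$. (a) Coefficients $a_\gamma(x,\varepsilon)\in\mathbb R$ ($\gamma\in(\varepsilon\mathbb Z)^d$, $x\in\mathbb R^d$) with: (i) $a_\gamma=a^{(0)}_\gamma(x)+\varepsilon a^{(1)}_\gamma(x)+R^{(2)}_\gamma(x,\varepsilon)$, $a^{(j)}_\gamma\in C^\infty$, $|a^{(j)}_\gamma(x)-a^{(j)}_\gamma(x+h)|=O(|h|)$ uniformly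 in $\gamma,x$, $R^{(2)}_\gamma\in C^\infty(\mathbb R^d\times(0,1])$; (ii) $\sum_\gamma a^{(0)}_\gamma=0$, $a^{(0)}_\gamma\le0$ for $\gamma\ne0$; (iii) $a_\gamma(x,\varepsilon)=a_{-\gamma}(x+\gamma,\varepsilon)$; (iv) for all $n\in\mathbb N,\alpha\in\mathbb N^d$, $\|\,|\cdot/\varepsilon|^n\partial^\alpha_xa^{(j)}_\cdot(x)\|_{\ell^2_\gamma}\le C$ and $\|\,|\cdot/\varepsilon|^n\partial^\alpha_xR^{(2)}_\cdot(x,\varepsilon)\|_{\ell^2_\gamma}\le C\varepsilon^2$ uniformly; (v) $\mathrm{span}\{\gamma:a^{(0)}_\gamma(x)<0\}=\mathbb R^d$ for all $x$. $T_\varepsilon=\sum_\gamma a_\gamma(\cdot,\varepsilon)\tau_\gamma$. (b) $V_\varepsilon$ is the restriction to $(\varepsilon\mathbb Z)^d$ of $\hat V_\varepsilon=V_0+\varepsilon V_1+R_2(\cdot;\varepsilon)\in C^\infty(\mathbb R^d)$, $V_0,V_1\in C^\infty$, $R_2\in C^\infty(\mathbb R^d\times(0,\varepsilon_0])$, $\sup_K|R_2|\le C_K\varepsilon^2$ on compacts $K$; $V_\varepsilon$ polynomially bounded and $V_\varepsilon(x)>C>0$ for $|x|\ge R$, $\varepsilon\le\varepsilon_0$; $V_0\ge0$, vanishing exactly at finitely many points $x_1,\dots,x_m$ with positive definite Hessians. (c) $t_0(x_j,\xi):=\sum_\gamma a^{(0)}_\gamma(x_j)e^{-i\gamma\cdot\xi/\varepsilon}>0$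 for $\xi\notin2\pi\mathbb Z^d$. $H_\varepsilon$ is the self-adjoint realization of $T_\varepsilon+V_\varepsilon$ on the maximal domain of multiplication by $V_\varepsilon$. *)

(* Defs.v *)
(* R : realType, R^d = 'rV[R]_d, lattice (eps Z)^d
   parametrized by integer row vectors k : 'rV[int]_d  (point eps * k). *)
From HB Require Import structures.
From mathcomp Require Import all_boot all_order all_algebra.
From mathcomp Require Import all_classical all_reals all_analysis.
Set Implicit Arguments. Unset Strict Implicit. Unset Printing Implicit Defensive.
Import Order.TTheory GRing.Theory Num.Theory.
Import numFieldNormedType.Exports.
Local Open Scope classical_set_scope.
Local Open Scope ring_scope.

Section Defs.
Variable R : realType.
Variable d : nat.

Notation Rd := 'rV[R]_d.
Notation Zd := 'rV[int]_d.

Definition enorm n (v : 'rV[R]_n) : R := Num.sqrt (\sum_i (v 0 i) ^+ 2).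

Definition zvec (k : Zd) : Rd := map_mx (fun z : int => z%:~R) k.
Definition lpt (eps : R) (k : Zd) : Rd := eps *: zvec k.

(* partial derivative in coordinate i and iterated partial derivatives
   (a list l of coordinates encodes the multi-index alpha) *)
Definition pderiv n (i : 'I_n) (f : 'rV[R]_n -> R) : 'rV[R]_n -> R :=
  fun x => 'D_(delta_mx 0 i) f x.
Fixpoint ipderiv n (l : seq 'I_n) (f : 'rV[R]_n -> R) : 'rV[R]_n -> R :=
  if l is i :: l' then pderiv i (ipderiv l' f) else f.

Definition smooth_open n (U : set 'rV[R]_n) (f : 'rV[R]_n -> R) :=
  forall l : seq 'I_n, forall x, U x ->
    {for x, continuous (ipderiv l f)} /\
    forall i : 'I_n, derivable (ipderiv l f) x (delta_mx 0 i).

Definition smooth n (f : 'rV[R]_n -> R) := smooth_open setT f.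

Definition smooth_on n (A : set 'rV[R]_n) (f : 'rV[R]_n -> R) :=
  exists F : 'rV[R]_n -> R, exists U : set 'rV[R]_n,
    [/\ open U, A `<=` U, smooth_open U F & forall x, A x -> F x = f x].

(* a function g(x, eps) on R^d x (0, b], seen on R^(d+1) *)
Definition joint (g : Rd -> R -> R) : 'rV[R]_(d + 1) -> R :=
  fun z => g (lsubmx z) (rsubmx z 0 0).
Definition strip (b : R) : set 'rV[R]_(d + 1) :=
  [set z | 0 < rsubmx z 0 0 <= b].

(* unconditional summation over Z^d *)
Definition has_sum (f : Zd -> R) (s : R) :=
  forall e : R, 0 < e -> exists S0 : seq Zd, forall S : seq Zd,
    uniq S -> {subset S0 <= S} -> `|\sum_(k <- S) f k - s| < e.

(* l^2_gamma norm of |gamma/eps|^n g_gamma bounded by C (gamma = eps k) *)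
Definition wl2_le (n : nat) (g : Zd -> R) (C : R) :=
  forall S : seq Zd, uniq S ->
    \sum_(k <- S) (enorm (zvec k) ^+ n * g k) ^+ 2 <= C ^+ 2.

Definition posdef n (M : 'M[R]_n) :=
  forall v : 'rV[R]_n, v != 0 -> 0 < (v *m M *m v^T) 0 0.

Definition hessian (f : Rd -> R) (x : Rd) : 'M[R]_d :=
  \matrix_(i, j) ipderiv [:: i; j] f x.

(* the coefficients a_gamma(x, eps), gamma = eps k *)
Definition coef (a0 a1 : Zd -> Rd -> R) (r2 : Zd -> Rd -> R -> R)
  (k : Zd) (x : Rd) (eps : R) : R := a0 k x + eps * a1 k x + r2 k x eps.

Definition pot (V0 V1 : Rd -> R) (r2 : Rd -> R -> R) (eps : R) (x : Rd) : R :=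
  V0 x + eps * V1 x + r2 x eps.

Definition coef_hyp (a0 a1 : Zd -> Rd -> R) (r2 : Zd -> Rd -> R -> R) :=
      (forall k, smooth (a0 k) /\ smooth (a1 k)) /\
      (forall k, smooth_on (strip 1) (joint (r2 k))) /\
      (forall aj, aj = a0 \/ aj = a1 -> exists C r : R, 0 < r /\
         forall k x h, enorm h < r -> `|aj k x - aj k (x + h)| <= C * enorm h) /\
      (forall x, has_sum (fun k => a0 k x) 0) /\
      (forall k x, k != 0 -> a0 k x <= 0) /\
      (forall eps k x, 0 < eps <= 1 ->
         coef a0 a1 r2 k x eps = coef a0 a1 r2 (- k) (x + lpt eps k) eps) /\
      (forall (n : nat) (l : seq 'I_d), exists C : R, forall x,
         wl2_le n (fun k => ipderiv l (a0 k) x) C /\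
         wl2_le n (fun k => ipderiv l (a1 k) x) C) /\
      (forall (n : nat) (l : seq 'I_d), exists C : R, forall x eps,
         0 < eps <= 1 -> wl2_le n (fun k => ipderiv l (r2 k ^~ eps) x) (C * eps ^+ 2)) /\
      (forall x, exists m, exists ks : 'I_m -> Zd,
         (forall i, a0 (ks i) x < 0) /\ row_full (\matrix_(i < m) zvec (ks i))).

Definition pot_hyp (eps0 : R) (V0 V1 : Rd -> R) (r2 : Rd -> R -> R)
  (a0 : Zd -> Rd -> R) :=
  0 < eps0 /\ (smooth V0 /\ smooth V1) /\
      smooth_on (strip eps0) (joint r2) /\
      (forall K : set Rd, compact K -> exists C : R, forall eps x,
         0 < eps <= eps0 -> K x -> `|r2 x eps| <= C * eps ^+ 2) /\
      (forall eps, 0 < eps <= eps0 -> exists (C : R) (N : nat), forall k : Zd,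
         `|pot V0 V1 r2 eps (lpt eps k)| <= C * (1 + enorm (lpt eps k)) ^+ N) /\
      (exists C R0 : R, 0 < C /\ forall eps (k : Zd), 0 < eps <= eps0 ->
         R0 <= enorm (lpt eps k) -> C < pot V0 V1 r2 eps (lpt eps k)) /\
    exists xs : seq Rd,
      [/\ forall x, 0 <= V0 x,
          forall x, V0 x = 0 <-> x \in xs,
          forall x, x \in xs -> posdef (hessian V0 x)
        & (* (c): t0(x_j, xi) = sum_k a0_k(x_j) e^{-i k.xi} is real and > 0
             for xi not in 2 pi Z^d *)
          forall x, x \in xs -> forall xi : Rd,
            ~ (exists z : Zd, xi = (2 * pi) *: zvec z) ->
            exists c : R, 0 < c /\
              has_sum (fun k => a0 k x * cos ((zvec k *m xi^T) 0 0)) c /\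
              has_sum (fun k => a0 k x * sin ((zvec k *m xi^T) 0 0)) 0].

(* <H phi, phi> for finitely supported phi : (eps Z)^d -> R *)
Definition Tphi (a : Zd -> Rd -> R -> R) (eps : R) (phi : Zd -> R) (k : Zd) : R :=
  \sum_(m \in [set: Zd]) a m (lpt eps k) eps * phi (k + m).

Definition qform (a : Zd -> Rd -> R -> R) (V : Rd -> R) (eps : R)
  (phi : Zd -> R) : R :=
  \sum_(k \in [set: Zd]) phi k * (Tphi a eps phi k + V (lpt eps k) * phi k).

Definition sqnorm (phi : Zd -> R) : R := \sum_(k \in [set: Zd]) phi k ^+ 2.

Definition c0 (D : set Zd) (phi : Zd -> R) :=
  finite_set [set k | phi k != 0] /\ [set k | phi k != 0] `<=` D.

Definition ball_lat (eps : R) (k : Zd) (r : R) : set Zd :=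
  [set k' | enorm (lpt eps k - lpt eps k') < r].

Definition LambdaR (a : Zd -> Rd -> R -> R) (V : Rd -> R) (eps r : R) (k : Zd) : R :=
  inf [set q | exists phi : Zd -> R, [/\ c0 (ball_lat eps k r) phi,
         phi != (fun _ => 0) & q = qform a V eps phi / sqnorm phi]].

End Defs.

(* Main.v *)
Require Import Defs.
From HB Require Import structures.
From mathcomp Require Import all_boot all_order all_algebra.
From mathcomp Require Import all_classical all_reals all_analysis.
Import Order.TTheory GRing.Theory Num.Theory.
Local Open Scope classical_set_scope.
Local Open Scope ring_scope.
From mathcomp Require Import lra zify ring.
Set Implicit Arguments. Unset Strict Implicit. Unset Printing Implicit Defensive.
Section Gen.
Variable R : realType.

Lemma fsumE (T : choiceType) (f : T -> R) (r : seq T) : uniq r ->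
  (forall k, f k != 0 -> k \in r) ->
  \sum_(k \in [set: T]) f k = \sum_(k <- r) f k.
Proof.
move=> ur hr; rewrite (fsbigE r) //.
- by apply: eq_bigl => k; rewrite in_setT.
- by move=> i _ nir; apply/eqP; apply/negPn; apply: contra nir; exact: hr.
Qed.

Lemma sum_sub_le (T : eqType) (f : T -> R) (r1 r2 : seq T) : uniq r1 -> uniq r2 ->
  {subset r1 <= r2} -> (forall k, 0 <= f k) ->
  \sum_(k <- r1) f k <= \sum_(k <- r2) f k.
Proof.
move=> u1 u2 sub f0.
have -> : \sum_(k <- r1) f k = \sum_(k <- r2 | k \in r1) f k.
  rewrite -[RHS]big_filter; apply: perm_big; apply: uniq_perm; rewrite ?filter_uniq //.
  by move=> x; rewrite mem_filter; case: (boolP (x \in r1)) => // /sub ->.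
rewrite [X in _ <= X](bigID (fun k => k \in r1)) /=.
by rewrite lerDl sumr_ge0.
Qed.

Lemma term_le_sum (T : eqType) (f : T -> R) (r : seq T) k : k \in r -> uniq r ->
  (forall k, 0 <= f k) -> f k <= \sum_(i <- r) f i.
Proof. by move=> kr ur f0; rewrite (bigD1_seq k) //= lerDl sumr_ge0. Qed.

Lemma sum1_seq (T : Type) (r : seq T) : \sum_(i <- r) (1 : R) = (size r)%:R.
Proof. elim: r => [|x r IH]; first by rewrite big_nil. by rewrite big_cons IH /= mulrS. Qed.

End Gen.
Section Box.
Variable R : realType.
Variable d : nat.
Notation Zd := 'rV[int]_d.

Definition boxs (I : seq int) : seq Zd :=
  [seq (\row_i nth 0 I (f i) : Zd) | f : {ffun 'I_d -> 'I_(size I)} <- enum {ffun 'I_d -> 'I_(size I)}].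

Lemma boxs_uniq I : uniq I -> uniq (boxs I).
Proof.
move=> uI; rewrite map_inj_uniq ?enum_uniq // => f1 f2 /rowP H.
apply/ffunP => i; move: (H i); rewrite !mxE => /eqP.
by rewrite nth_uniq // => /eqP /val_inj.
Qed.

Lemma boxs_mem I (z : Zd) : (forall i, z 0 i \in I) -> z \in boxs I.
Proof.
move=> hz; apply/mapP.
exists [ffun i => Ordinal (etrans (index_mem (z 0 i) I) (hz i))]; first by rewrite mem_enum.
by apply/rowP => i; rewrite !mxE ffunE /= nth_index.
Qed.

Lemma boxs_prod I (g : 'I_d -> int -> R) :
  \sum_(z <- boxs I) \prod_i g i (z 0 i) = \prod_i \sum_(j <- I) g i j.
Proof.
rewrite big_map big_enum /=.
have -> : \prod_i \sum_(j <- I) g i j = \prod_i \sum_(j < size I) g i (nth 0 I j).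
  by apply: eq_bigr => i _; rewrite (big_nth 0) big_mkord.
rewrite bigA_distr_bigA /=; apply: eq_bigr => f _; apply: eq_bigr => i _.
by rewrite mxE.
Qed.

Definition Jn (N : nat) : seq int :=
  0 :: [seq Posz k.+1 | k <- iota 0 N] ++ [seq Negz k | k <- iota 0 N].

Lemma Jn_uniq N : uniq (Jn N).
Proof.
rewrite /= cat_uniq !map_inj_uniq ?iota_uniq //; last 2 first.
- by move=> a b [].
- by move=> a b [].
rewrite andbT mem_cat negb_or; apply/andP; split; [apply/andP; split|].
- by apply/mapP => -[].
- by apply/mapP => -[].
- by apply/hasP => -[x /mapP [k _ ->]] /mapP [].
Qed.

Lemma Jn_mem N (j : int) : (`|j| <= N)%N -> j \in Jn N.
Proof.
case: j => [[|k]|k] /= hk; rewrite inE ?eqxx //= mem_cat.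
- by apply/orP; left; apply/mapP; exists k; rewrite // mem_iota.
- by apply/orP; right; apply/mapP; exists k; rewrite // mem_iota.
Qed.

Lemma seq_in_box (M : seq Zd) : exists N : nat,
  forall m, m \in M -> forall i, (`|m ord0 i| <= N)%N.
Proof.
elim: M => [|m M [N HN]]; first by exists 0%N.
exists (maxn N (\max_(i < d) `|m ord0 i|)) => m'; rewrite inE => /orP [/eqP -> | /HN h] i.
- by rewrite leq_max; apply/orP; right; apply: (leq_bigmax_cond i).
- by rewrite leq_max h.
Qed.

Lemma box_mem N (z : Zd) : (forall i, (`|z ord0 i| <= N)%N) -> z \in boxs (Jn N).
Proof. by move=> h; apply: boxs_mem => i; apply: Jn_mem. Qed.

End Box.
Section Lat.
Variable R : realType.
Variable d : nat.
Notation Zd := 'rV[int]_d.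

Definition qq (m : Zd) : R := \sum_i ((m 0 i)%:~R) ^+ 2.
Definition ww (m : Zd) : R := \prod_i (1 + ((m 0 i)%:~R) ^+ 2)^-1.

Lemma qq_ge0 m : 0 <= qq m.
Proof. by apply: sumr_ge0 => i _; apply: sqr_ge0. Qed.

Lemma ww_ge0 m : 0 <= ww m.
Proof. by apply: prodr_ge0 => i _; rewrite invr_ge0 addr_ge0 ?sqr_ge0. Qed.

Lemma tele (N : nat) :
  \sum_(k <- iota 0 N) (1 + (k.+1)%:R ^+ 2 : R)^-1 + 2 / (N.+1)%:R <= 2.
Proof.
elim: N => [|N IH]; first by rewrite big_nil add0r divr1.
rewrite -addn1 iotaD big_cat big_seq1 /= add0n addn1.
set a : R := (N.+1)%:R.
have a1 : 1 <= a by rewrite /a ler1n.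
have -> : (N.+2)%:R = a + 1 :> R by rewrite /a -natr1.
have e : 2 / a - 2 / (a + 1) = (a * (a + 1) / 2)^-1.
  field; have := ler0n R N; move=> h; apply/andP; split; rewrite gt_eqF //; lra.
have key : (1 + a ^+ 2)^-1 <= (a * (a + 1) / 2)^-1.
  rewrite ler_pV2 ?inE ?unitfE /=; try (apply/andP; split); try nra.
have IH2 : \sum_(k <- iota 0 N) (1 + (k.+1)%:R ^+ 2 : R)^-1 + 2 / a <= 2 := IH.
move: IH2 e key; set T := \sum_(_ <- _) _; set h := (1 + a ^+ 2)^-1; set p := 2 / a; set r := 2 / (a + 1); set X := (_ / 2)^-1.
lra.
Qed.

Lemma h1d N : \sum_(j <- Jn N) (1 + (j%:~R : R) ^+ 2)^-1 <= 5.
Proof.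
rewrite /Jn big_cons big_cat !big_map /= expr0n /= addr0 invr1.
have -> : \sum_(j <- iota 0 N) (1 + (Negz j)%:~R ^+ 2 : R)^-1 =
          \sum_(j <- iota 0 N) (1 + (j.+1)%:R ^+ 2 : R)^-1.
  by apply: eq_bigr => j _; rewrite NegzE rmorphN sqrrN.
have := tele N.
have : 0 <= 2 / (N.+1)%:R :> R by rewrite divr_ge0 ?ler0n.
have -> : \sum_(j <- iota 0 N) (1 + (Posz j.+1)%:~R ^+ 2 : R)^-1 =
          \sum_(j <- iota 0 N) (1 + (j.+1)%:R ^+ 2 : R)^-1 by [].
set T := \sum_(_ <- _) _; set p := 2 / _; lra.
Qed.

Lemma ww_sum (M : seq Zd) : uniq M -> \sum_(m <- M) ww m <= 5 ^+ d.
Proof.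
move=> uM; have [N HN] := seq_in_box M.
apply: le_trans (sum_sub_le uM (boxs_uniq d (Jn_uniq N)) _ ww_ge0) _.
  by move=> m /HN h; apply: box_mem.
rewrite /ww (boxs_prod (Jn N) (fun i j => (1 + (j%:~R : R) ^+ 2)^-1)).
have -> : (5 : R) ^+ d = \prod_(i < d) 5 by rewrite prodr_const card_ord.
by apply: ler_prod => i _; rewrite sumr_ge0 ?h1d // => j _; rewrite invr_ge0 addr_ge0 ?sqr_ge0.
Qed.

Lemma enorm_zvec (m : Zd) : enorm (zvec R m) = Num.sqrt (qq m).
Proof. by rewrite /enorm /qq; congr Num.sqrt; apply: eq_bigr => i _; rewrite mxE. Qed.

Lemma qq_ge1 (m : Zd) : qq m != 0 -> 1 <= qq m.
Proof.
have -> : qq m = (\sum_i (m 0 i) ^+ 2)%:~R.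
  by rewrite /qq rmorph_sum; apply: eq_bigr => i _; rewrite rmorphXn.
rewrite intr_eq0 => nz; rewrite ler1z -gtz0_ge1 lt_neqAle eq_sym nz /=.
by apply: sumr_ge0 => i _; apply: sqr_ge0.
Qed.

Lemma term_bound (g : R) (m : Zd) :
  `|g| * qq m <= ((enorm (zvec R m) ^+ (d + 2) * g) ^+ 2 + 2 ^+ d * ww m) / 2.
Proof.
have hw := ww_ge0 m.
case: (eqVneq (qq m) 0) => [->|nz].
  by rewrite mulr0 divr_ge0 // addr_ge0 ?sqr_ge0 // mulr_ge0 // exprn_ge0.
have Q1 := qq_ge1 nz; set Q := qq m in Q1 nz *.
rewrite enorm_zvec -/Q; set e := Num.sqrt Q.
have e2 : e ^+ 2 = Q by rewrite sqr_sqrtr //; lra.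
have e0 : 0 < e by rewrite sqrtr_gt0; lra.
have s1 : (Q ^+ d)^-1 <= 2 ^+ d * ww m.
  have hp : \prod_i (1 + ((m 0 i)%:~R) ^+ 2) <= (2 * Q) ^+ d :> R.
    have -> : (2 * Q) ^+ d = \prod_(i < d) (2 * Q) by rewrite prodr_const card_ord.
    apply: ler_prod => i _.
    rewrite addr_ge0 ?sqr_ge0 //=.
    have : ((m 0 i)%:~R) ^+ 2 <= Q :> R.
      by rewrite /Q /qq (bigD1 i) //= lerDl sumr_ge0 // => k _; apply: sqr_ge0.
    lra.
  have hp0 : 0 < \prod_i (1 + ((m 0 i)%:~R) ^+ 2) :> R.
    by apply: prodr_gt0 => i _; have := sqr_ge0 ((m 0 i)%:~R : R); lra.
  have -> : (Q ^+ d)^-1 = 2 ^+ d * ((2 * Q) ^+ d)^-1.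
    by rewrite exprMn invfM mulrA mulfV ?mul1r // expf_neq0.
  rewrite /ww prodfV ler_wpM2l ?exprn_ge0 //.
  have hQ : 0 < (2 * Q) ^+ d by rewrite exprn_gt0 //; lra.
  by rewrite ler_pV2 // inE unitfE /= ?hp0 ?hQ gt_eqF.
set u := e ^+ (d + 2) * `|g|.
set v := (e ^+ d)^-1.
have uv : u * v = `|g| * Q.
  rewrite /u /v exprD e2; field; by rewrite expf_neq0 // gt_eqF.
have u2 : u ^+ 2 = (e ^+ (d + 2) * g) ^+ 2 by rewrite /u !exprMn real_normK ?num_real.
have v2 : v ^+ 2 = (Q ^+ d)^-1 by rewrite /v exprVn -exprM mulnC exprM e2.
have := sqr_ge0 (u - v).
rewrite -uv; lra.
Qed.

Lemma wl2_sum (g : Zd -> R) (C : R) (M : seq Zd) : wl2_le (d + 2) g C -> uniq M ->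
  \sum_(m <- M) `|g m| * qq m <= (C ^+ 2 + 2 ^+ d * 5 ^+ d) / 2.
Proof.
move=> hw uM.
apply: (le_trans (ler_sum _ (fun m _ => term_bound (g m) m))).
rewrite -mulr_suml big_split /= -mulr_sumr.
have := hw M uM; have := ww_sum uM.
have : 0 <= 2 ^+ d :> R by rewrite exprn_ge0.
move=> h2 h5 hC.
have : 2 ^+ d * \sum_(i <- M) ww i <= 2 ^+ d * 5 ^+ d by rewrite ler_wpM2l.
lra.
Qed.

End Lat.
Section Coef.
Variable R : realType.
Variable d : nat.
Notation Zd := 'rV[int]_d.

Lemma coefA (a0 a1 : Zd -> 'rV[R]_d -> R) (ra : Zd -> 'rV[R]_d -> R -> R) (eps : R) :
  coef_hyp a0 a1 ra -> 0 < eps <= 1 ->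
  exists A : R, 0 <= A /\ forall (x : 'rV[R]_d) (M : seq Zd), uniq M ->
    \sum_(m <- M) `|coef a0 a1 ra m x eps| * qq R m <= A.
Proof.
case=> _ [_ [_ [_ [_ [_ [Hiv [Hivr _]]]]]]] /andP [e0 e1].
have [C0 HC0] := Hiv (d + 2)%N [::].
have [C2 HC2] := Hivr (d + 2)%N [::].
set K : R := 2 ^+ d * 5 ^+ d.
have K0 : 0 <= K by rewrite mulr_ge0 ?exprn_ge0.
exists ((C0 ^+ 2 + K) / 2 + eps * ((C0 ^+ 2 + K) / 2) + ((C2 * eps ^+ 2) ^+ 2 + K) / 2).
split.
  have := sqr_ge0 C0; have := sqr_ge0 (C2 * eps ^+ 2).
  move=> h1 h2; have : 0 <= eps * ((C0 ^+ 2 + K) / 2) by rewrite mulr_ge0 //; lra.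
  lra.
move=> x M uM.
have h0 : \sum_(m <- M) `|a0 m x| * qq R m <= (C0 ^+ 2 + K) / 2.
  exact: (wl2_sum (g := fun k => a0 k x) (HC0 x).1 uM).
have h1 : \sum_(m <- M) `|a1 m x| * qq R m <= (C0 ^+ 2 + K) / 2.
  exact: (wl2_sum (g := fun k => a1 k x) (HC0 x).2 uM).
have h2 : \sum_(m <- M) `|ra m x eps| * qq R m <= ((C2 * eps ^+ 2) ^+ 2 + K) / 2.
  exact: (wl2_sum (g := fun k => ra k x eps) (HC2 x eps (introT andP (conj e0 e1))) uM).
apply: le_trans (_ : \sum_(m <- M) (`|a0 m x| * qq R m + eps * (`|a1 m x| * qq R m)
   + `|ra m x eps| * qq R m) <= _).
  apply: ler_sum => m _; rewrite /coef mulrA -!mulrDl.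
  apply: ler_wpM2r; first exact: qq_ge0.
  apply: le_trans (ler_normD _ _) _; rewrite lerD2r.
  by apply: le_trans (ler_normD _ _) _; rewrite normrM (gtr0_norm e0).
rewrite !big_split /= -mulr_sumr.
have : eps * \sum_(i <- M) `|a1 i x| * qq R i <= eps * ((C0 ^+ 2 + K) / 2) by rewrite ler_wpM2l //; lra.
lra.
Qed.

Variable L : nat.

Definition tent (j : int) : R := if (0 <= j) && (j < L%:Z) then 1 else 0.
Definition IL : seq int := [seq (k%:Z) | k <- iota 0 L].

Lemma IL_uniq : uniq IL.
Proof. by rewrite map_inj_uniq ?iota_uniq // => a b []. Qed.

Lemma tt_supp j : tent j != 0 -> j \in IL.
Proof.
rewrite /tent; case: ifP => [/andP [h0 h] _ | _]; last by rewrite eqxx.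
have [k ek] : exists k : nat, j = k%:Z by exists `|j|%N; rewrite gez0_abs.
rewrite ek in h *; apply/mapP; exists k => //; rewrite mem_iota /=; lia.
Qed.

Lemma tt_ge0 j : 0 <= tent j. Proof. by rewrite /tent; case: ifP. Qed.
Lemma tt_le1 j : tent j <= 1. Proof. by rewrite /tent; case: ifP. Qed.
Lemma tt_IL j : j \in IL -> tent j = 1.
Proof. by case/mapP => k; rewrite mem_iota /tent => /andP [_ h] ->; case: ifP => // /negP []; apply/andP; split; lia. Qed.

Definition chi (z : Zd) : R := \prod_i tent (z 0 i).
Definition cc (n : int) : R := \sum_(j \in [set: int]) tent j * tent (j + n).
Definition PP (m : Zd) : R := \sum_(z \in [set: Zd]) chi z * chi (z + m).

Lemma chi_ge0 z : 0 <= chi z.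
Proof. by apply: prodr_ge0 => i _; apply: tt_ge0. Qed.

Lemma cc_seq n : cc n = \sum_(j <- IL) tent j * tent (j + n).
Proof.
apply: fsumE; first exact: IL_uniq.
by move=> j nz; apply: tt_supp; apply: contra nz => /eqP ->; rewrite mul0r.
Qed.

Lemma chi_supp z : chi z != 0 -> z \in boxs d IL.
Proof.
move=> nz; apply: boxs_mem => i; apply: tt_supp; apply: contra nz => /eqP h.
by rewrite /chi (bigD1 i) //= h mul0r.
Qed.

Lemma PP_prod m : PP m = \prod_i cc (m 0 i).
Proof.
rewrite /PP (fsumE (r := boxs d IL)) ?boxs_uniq ?IL_uniq //; last first.
  by move=> z nz; apply: chi_supp; apply: contra nz => /eqP ->; rewrite mul0r.
have -> : \sum_(z <- boxs d IL) chi z * chi (z + m) =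
   \sum_(z <- boxs d IL) \prod_i (tent (z 0 i) * tent (z 0 i + m 0 i)).
  apply: eq_bigr => z _; rewrite /chi -big_split /=; apply: eq_bigr => i _.
  by rewrite mxE.
rewrite (boxs_prod IL (fun i j => tent j * tent (j + m 0 i))).
by apply: eq_bigr => i _; rewrite cc_seq.
Qed.

Lemma cc_ge0 n : 0 <= cc n.
Proof. by rewrite cc_seq; apply: sumr_ge0 => j _; rewrite mulr_ge0 ?tt_ge0. Qed.

Lemma cc_le n : cc n <= L%:R.
Proof.
rewrite cc_seq; apply: le_trans (_ : \sum_(j <- IL) (1 : R) <= _).
  apply: ler_sum => j _; have := tt_le1 j; have := tt_le1 (j + n).
  have := tt_ge0 j; have := tt_ge0 (j + n); nra.
by rewrite sum1_seq size_map size_iota.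
Qed.

Lemma cc0 : cc 0 = L%:R.
Proof.
rewrite cc_seq big_seq (eq_bigr (fun _ => 1)) -?big_seq.
  by rewrite sum1_seq size_map size_iota.
by move=> j jI; rewrite addr0 tt_IL // mul1r.
Qed.

Lemma cc_lb n : L%:R - 2 * (`|n|%N)%:R <= cc n.
Proof.
set a := `|n|%N.
case: (leqP L (2 * a)) => h.
  have : (L%:R : R) <= (2 * a)%:R by rewrite ler_nat.
  rewrite natrM; have := cc_ge0 n; lra.
rewrite cc_seq.
set r1 := [seq (k%:Z) | k <- iota a (L - 2 * a)].
have u1 : uniq r1 by rewrite map_inj_uniq ?iota_uniq // => u v [].
have s1 : {subset r1 <= IL}.
  move=> j /mapP [k]; rewrite mem_iota => /andP [_ hk] ->.
  apply/mapP; exists k => //; rewrite mem_iota /=; lia.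
apply: le_trans (sum_sub_le u1 IL_uniq s1 (fun j => mulr_ge0 (tt_ge0 j) (tt_ge0 (j + n)))).
rewrite big_seq (eq_bigr (fun _ => 1)) -?big_seq.
  rewrite sum1_seq size_map size_iota natrB; last lia.
  by rewrite natrM.
move=> j /mapP [k]; rewrite mem_iota => /andP [hk1 hk2] ->.
rewrite /tent; case: ifP => [_|]; last by move=> /negP []; apply/andP; split; lia.
case: ifP => [_|]; first by rewrite mulr1.
by move=> /negP []; apply/andP; split; rewrite /a in hk1 hk2 *; lia.
Qed.

End Coef.
Section PPb.
Variable R : realType.
Variable d : nat.
Notation Zd := 'rV[int]_d.
Variable L : nat.

Lemma prod_diff (n : nat) (c : 'I_n -> R) (Lr : R) : 0 <= Lr ->
  (forall i, 0 <= c i <= Lr) ->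
  0 <= Lr ^+ n - \prod_i c i /\
  Lr * (Lr ^+ n - \prod_i c i) <= Lr ^+ n * \sum_i (Lr - c i).
Proof.
elim: n c => [|n IH] c L0 hc.
  by rewrite !big_ord0 expr0 subrr mulr0 mul1r.
have [i1 i2] := IH (fun i => c (widen_ord (leqnSn n) i)) L0 (fun i => hc _).
rewrite big_ord_recr big_ord_recr /=.
set P := \prod_(i < n) c (widen_ord (leqnSn n) i) in i1 i2 *.
set s := \sum_(i < n) (Lr - c (widen_ord (leqnSn n) i)) in i1 i2 *.
have /andP [x0 xL] := hc ord_max; set x := c ord_max in x0 xL *.
have P0 : 0 <= P by apply: prodr_ge0 => i _; have /andP [] := hc (widen_ord (leqnSn n) i).
have Ln0 : 0 <= Lr ^+ n by rewrite exprn_ge0.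
rewrite exprSr.
have h1 : P * x <= Lr ^+ n * Lr by rewrite ler_pM //; lra.
split; first lra.
have h2 : Lr * (Lr * (Lr ^+ n - P)) <= Lr * (Lr ^+ n * s) by rewrite ler_wpM2l.
have h3 : P * (Lr * (Lr - x)) <= Lr ^+ n * (Lr * (Lr - x)).
  by rewrite ler_wpM2r // ?mulr_ge0 //; lra.
have -> : Lr * (Lr ^+ n * Lr - P * x) = Lr * (Lr * (Lr ^+ n - P)) + P * (Lr * (Lr - x)) by ring.
have -> : Lr ^+ n * Lr * (s + (Lr - x)) = Lr * (Lr ^+ n * s) + Lr ^+ n * (Lr * (Lr - x)) by ring.
lra.
Qed.

Lemma abs_le_sq (z : int) : (`|z|%N)%:R <= (z%:~R : R) ^+ 2.
Proof.
have -> : (z%:~R : R) ^+ 2 = ((`|z|%N)%:R) ^+ 2.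
  by rewrite -(real_normK (num_real (z%:~R : R))) -intr_norm natr_absz.
rewrite -natrX ler_nat; case: (`|z|%N) => // k.
by rewrite expnS leq_pmulr // expn_gt0.
Qed.

Lemma PP0 : PP R L (0 : Zd) = L%:R ^+ d.
Proof.
rewrite PP_prod (eq_bigr (fun _ => L%:R)); first by rewrite prodr_const card_ord.
by move=> i _; rewrite mxE cc0.
Qed.

Lemma PP_bounds (m : Zd) : 0 <= PP R L (0 : Zd) - PP R L m /\
  L%:R * (PP R L (0 : Zd) - PP R L m) <= 2 * PP R L (0 : Zd) * qq R m.
Proof.
rewrite PP0 PP_prod.
have hc : forall i : 'I_d, 0 <= cc R L (m 0 i) <= L%:R.
  by move=> i; rewrite cc_ge0 cc_le.
have [h1 h2] := @prod_diff d (fun i => cc R L (m 0 i)) L%:R (ler0n R L) hc.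
split => //; apply: le_trans h2 _.
rewrite -mulrA mulrCA ler_wpM2l ?exprn_ge0 // /qq mulr_sumr.
apply: ler_sum => i _; have := cc_lb R L (m 0 i); have := abs_le_sq (m 0 i); lra.
Qed.

End PPb.
Section QFs.
Variable R : realType.
Variable d : nat.
Notation Zd := 'rV[int]_d.
Variable a : Zd -> 'rV[R]_d -> R -> R.
Variable V : 'rV[R]_d -> R.
Variable eps : R.

Definition bb (m k : Zd) : R := a m (lpt eps k) eps.
Definition QF (F : seq Zd) (psi : Zd -> R) : R :=
  \sum_(k <- F) psi k * (\sum_(j <- F) bb (j - k) k * psi j + V (lpt eps k) * psi k).

Lemma qform_QF (F : seq Zd) (psi : Zd -> R) : uniq F -> (forall k, psi k != 0 -> k \in F) ->
  qform a V eps psi = QF F psi.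
Proof.
move=> uF hF; rewrite /qform (fsumE (r := F)) //; last first.
  by move=> k nz; apply: hF; apply: contra nz => /eqP ->; rewrite mul0r.
apply: eq_big_seq => k kF; congr (_ * (_ + _)).
rewrite /Tphi (fsumE (r := [seq j - k | j <- F])); last 2 first.
- by rewrite map_inj_uniq // => x y /addIr.
- move=> m nz; apply/mapP; exists (k + m); last by rewrite [k + m]addrC addrK.
  by apply: hF; apply: contra nz => /eqP ->; rewrite mulr0.
by rewrite big_map; apply: eq_bigr => j _; rewrite [k + (j - k)]addrC subrK.
Qed.

Lemma sqnorm_E (F : seq Zd) (psi : Zd -> R) : uniq F -> (forall k, psi k != 0 -> k \in F) ->
  sqnorm psi = \sum_(k <- F) psi k ^+ 2.
Proof.
move=> uF hF; rewrite /sqnorm (fsumE (r := F)) //.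
by move=> k nz; apply: hF; apply: contra nz; rewrite sqrf_eq0.
Qed.

Lemma QF_split (F : seq Zd) (psi : Zd -> R) : QF F psi =
  \sum_(k <- F) \sum_(j <- F) psi k * psi j * bb (j - k) k +
  \sum_(k <- F) V (lpt eps k) * psi k ^+ 2.
Proof.
rewrite /QF -big_split; apply: eq_bigr => k _ /=; rewrite mulrDr mulr_sumr.
by congr (_ + _); [apply: eq_bigr => j _|]; ring.
Qed.

Lemma prod_lb (x y b N : R) : x ^+ 2 <= N -> y ^+ 2 <= N -> - (`|b| * N) <= x * y * b.
Proof.
move=> hx hy.
have h1 : x * y <= N by have := sqr_ge0 (x - y); lra.
have h2 : - N <= x * y by have := sqr_ge0 (x + y); lra.
case: (lerP 0 b) => hb.
  rewrite ger0_norm //; have := ler_wpM2r hb h2; lra.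
rewrite ltr0_norm //; have := ler_wnM2r (ltW hb) h1; lra.
Qed.

Lemma QF_lb (F : seq Zd) (psi : Zd -> R) : uniq F ->
  - ((\sum_(k <- F) \sum_(j <- F) `|bb (j - k) k| + \sum_(k <- F) `|V (lpt eps k)|)
     * \sum_(k <- F) psi k ^+ 2) <= QF F psi.
Proof.
move=> uF; rewrite QF_split; set N := \sum_(k <- F) psi k ^+ 2.
have hN : forall k, k \in F -> psi k ^+ 2 <= N.
  by move=> k kF; apply: (term_le_sum (f := fun k => psi k ^+ 2)) => // i; apply: sqr_ge0.
rewrite mulrDl opprD mulr_suml mulr_suml -!sumrN; apply: lerD.
  rewrite big_seq [X in _ <= X]big_seq; apply: ler_sum => k kF.
  rewrite mulr_suml -sumrN big_seq [X in _ <= X]big_seq; apply: ler_sum => j jF.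
  by apply: prod_lb; apply: hN.
rewrite big_seq [X in _ <= X]big_seq; apply: ler_sum => k kF.
have h := @prod_lb (psi k) (psi k) (V (lpt eps k)) N (hN k kF) (hN k kF).
rewrite expr2; lra.
Qed.

End QFs.
Section Ball.
Variable R : realType.
Variable d : nat.
Notation Zd := 'rV[int]_d.
Variable a : Zd -> 'rV[R]_d -> R -> R.
Variable V : 'rV[R]_d -> R.
Variable eps : R.
Hypothesis eps0 : 0 < eps.

Lemma coord_le_enorm n (v : 'rV[R]_n) i : `|v 0 i| <= enorm v.
Proof.
rewrite /enorm -sqrtr_sqr; apply: ler_wsqrtr.
by rewrite (bigD1 i) //= lerDl sumr_ge0 // => k _; apply: sqr_ge0.
Qed.

Lemma lpt_coord (k : Zd) i : lpt eps k 0 i = eps * (k 0 i)%:~R.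
Proof. by rewrite /lpt /zvec !mxE. Qed.

Lemma absz_real (z : int) : (`|z|%N)%:R = `|(z%:~R : R)|.
Proof. by rewrite natr_absz intr_norm. Qed.

Lemma ball_cover (y : Zd) (r : R) : exists G : seq Zd, uniq G /\
  forall k, ball_lat eps y r k -> k \in G.
Proof.
set x := `|r| / eps.
have x0 : 0 <= x by rewrite divr_ge0 // ltW.
set N := Num.Def.archi_bound x.
have hN := archi_boundP x0; rewrite -/N in hN.
exists [seq y + z | z <- boxs d (Jn N)]; split.
  by rewrite map_inj_uniq ?boxs_uniq ?Jn_uniq // => u v /addrI.
move=> k hk; apply/mapP; exists (k - y); last by rewrite addrC subrK.
apply: box_mem => i; rewrite -(ler_nat R) absz_real.
have := coord_le_enorm (lpt eps y - lpt eps k) i.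
rewrite /ball_lat /= in hk.
have e : (lpt eps y - lpt eps k) 0 i = eps * ((y 0 i)%:~R - (k 0 i)%:~R) :> R.
  by rewrite !mxE mulrBr.
rewrite e normrM (gtr0_norm eps0) => hle.
have h1 : eps * `|(y 0 i)%:~R - (k 0 i)%:~R| < `|r|.
  exact: le_lt_trans hle (lt_le_trans hk (ler_norm r)).
have h2 : `|(y 0 i)%:~R - (k 0 i)%:~R| < x by rewrite /x ltr_pdivlMr // mulrC.
have ek : (k - y) ord0 i = k 0 i - y 0 i by rewrite !mxE.
rewrite ek rmorphB /= distrC; apply: ltW; exact: lt_trans hN.
Qed.

Lemma Ray_lb (y : Zd) (r : R) : exists M : R, forall psi : Zd -> R,
  c0 (ball_lat eps y r) psi -> psi != (fun _ => 0) ->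
  - M <= qform a V eps psi / sqnorm psi.
Proof.
have [G [uG hG]] := ball_cover y r.
exists (\sum_(k <- G) \sum_(j <- G) `|bb a eps (j - k) k| + \sum_(k <- G) `|V (lpt eps k)|).
move=> psi [_ hsub] nz.
have hF : forall k, psi k != 0 -> k \in G by move=> k h; apply: hG; apply: hsub.
rewrite (qform_QF a V eps uG hF) (sqnorm_E uG hF).
have [k hk] : exists k, psi k != 0.
  apply/not_existsP => hall; move/eqP: nz; apply; apply/funext => k.
  by apply/eqP; apply/negPn/negP => h; apply: (hall k).
have Npos : 0 < \sum_(k <- G) psi k ^+ 2.
  apply: lt_le_trans (term_le_sum (f := fun k => psi k ^+ 2) (hF k hk) uG (fun i => sqr_ge0 _)).
  by rewrite exprn_even_gt0.
by rewrite ler_pdivlMr // mulNr; apply: (QF_lb a V eps _ uG).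
Qed.

Lemma Lambda_le (y : Zd) (r : R) (psi : Zd -> R) :
  c0 (ball_lat eps y r) psi -> psi != (fun _ => 0) ->
  LambdaR a V eps r y <= qform a V eps psi / sqnorm psi.
Proof.
move=> hc nz; rewrite /LambdaR.
have [M HM] := Ray_lb y r.
apply: ge_inf; last by exists psi.
by exists (- M) => q [phi [h1 h2 ->]]; apply: HM.
Qed.

End Ball.
Section Main.
Variable R : realType.
Variable d : nat.
Notation Zd := 'rV[int]_d.
Variable a : Zd -> 'rV[R]_d -> R -> R.
Variable V : 'rV[R]_d -> R.
Variable eps : R.
Hypothesis eps0 : 0 < eps.
Variable L : nat.
Variable F : seq Zd.
Hypothesis uF : uniq F.

Let S := PP R L (0 : Zd).
Let X : seq Zd := undup [seq k - z | k <- F, z <- boxs d (IL L)].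
Let ch := @chi R d L.
Definition psi (phi : Zd -> R) (x : Zd) : Zd -> R := fun k => ch (k - x) * phi k.

Lemma chi_box z : ch z != 0 -> z \in boxs d (IL L).
Proof. exact: chi_supp. Qed.

Lemma Pid k j : k \in F -> \sum_(x <- X) ch (k - x) * ch (j - x) = PP R L (j - k).
Proof.
move=> kF; rewrite -(fsumE (r := X)); last 2 first.
- exact: undup_uniq.
- move=> x nz; rewrite mem_undup.
  have h : ch (k - x) != 0 by apply: contra nz => /eqP ->; rewrite mul0r.
  by rewrite -[x](subKr k); apply: allpairs_f => //; apply: chi_box.
rewrite (reindex_fsbigT (fun z => k - z)); last by exists (fun z => k - z) => z; rewrite subKr.
rewrite /PP; apply: eq_fsbigr => z _; rewrite subKr /ch; congr (_ * @chi R d L _).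
by rewrite opprB addrCA.
Qed.

Hypothesis L0 : (0 < L)%N.
Variable r : R.
Hypothesis hr : L%:R * eps * d%:R < r.
Variable phi : Zd -> R.
Hypothesis hF : forall k, phi k != 0 -> k \in F.
Hypothesis finphi : finite_set [set k | phi k != 0].

Lemma S_pos : 0 < S.
Proof. by rewrite /S PP0 exprn_gt0 // ltr0n. Qed.

Lemma chi_coord z i : ch z != 0 -> 0 <= z 0 i < L%:Z.
Proof.
move=> nz; have : tent R L (z 0 i) != 0.
  by apply: contra nz => /eqP h; rewrite /ch /chi (bigD1 i) //= h mul0r.
by rewrite /tent; case: ifP => //; rewrite eqxx.
Qed.

Lemma dist_lt (x y k : Zd) : ch (k - x) != 0 -> ch (y - x) != 0 ->
  enorm (lpt eps y - lpt eps k) < r.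
Proof.
move=> hk hy.
have r0 : 0 < r.
  apply: le_lt_trans hr; rewrite !mulr_ge0 ?ler0n //; exact: ltW.
rewrite /enorm -(gtr0_norm r0) -sqrtr_sqr ltr_sqrt ?exprn_gt0 //.
apply: le_lt_trans (_ : \sum_(i < d) (eps * L%:R) ^+ 2 < _).
  apply: ler_sum => i _.
  have /andP [h1 h2] := chi_coord i hk; have /andP [h3 h4] := chi_coord i hy.
  have e1 : ((k - x) 0 i : int) = k 0 i - x 0 i by rewrite !mxE.
  have e2 : ((y - x) 0 i : int) = y 0 i - x 0 i by rewrite !mxE.
  rewrite e1 in h1 h2; rewrite e2 in h3 h4.
  have hb : `|y 0 i - k 0 i| < L%:Z.
    have h5 : (- L%:Z < y 0 i - k 0 i) && (y 0 i - k 0 i < L%:Z) by apply/andP; split; lia.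
    by rewrite ltr_norml.
  have hv : `|(lpt eps y - lpt eps k) 0 i| <= eps * L%:R.
    rewrite !mxE -mulrBr normrM (gtr0_norm eps0) ler_wpM2l ?(ltW eps0) //.
    rewrite -rmorphB /= -intr_norm; have h6 : `|y 0 i - k 0 i| <= L%:Z by exact: ltW.
    by rewrite -(ler_int R) in h6.
  have := normr_ge0 ((lpt eps y - lpt eps k) 0 i).
  rewrite -(real_normK (num_real ((lpt eps y - lpt eps k) 0 i))).
  move: hv; set u := `|_|; move=> hv hu; nra.
rewrite sumr_const card_ord.
have hd : (d%:R : R) <= d%:R ^+ 2.
  by rewrite -natrX ler_nat; case: (d) => // n; rewrite expnS leq_pmulr // expn_gt0.
have e0 : 0 <= (eps * L%:R) ^+ 2 by apply: sqr_ge0.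
apply: le_lt_trans (_ : (eps * L%:R * d%:R) ^+ 2 < _).
  by rewrite [X in _ <= X]exprMn -[_ *+ d]mulr_natr ler_wpM2l.
have h0 : 0 <= eps * L%:R * d%:R by rewrite !mulr_ge0 ?ler0n // ltW.
rewrite ltr_pXn2r // ?inE //; last exact: ltW.
by rewrite [eps * _]mulrC.
Qed.


Let Lam (y : Zd) := LambdaR a V eps r y.

Lemma psi_supp x k : psi phi x k != 0 -> k \in F.
Proof. by move=> nz; apply: hF; apply: contra nz => /eqP h; rewrite /psi h mulr0. Qed.

Lemma per_x x : \sum_(y <- F) Lam y * psi phi x y ^+ 2 <= QF a V eps F (psi phi x).
Proof.
set p := psi phi x.
have hp : forall k, p k != 0 -> k \in F by move=> k; apply: psi_supp.
case: (pselect (exists y, y \in F /\ p y != 0)) => [[y0 [y0F py0]] | none]; last first.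
  have p0 : forall y, y \in F -> p y = 0.
    by move=> y yF; apply/eqP; apply/negPn/negP => h; apply: none; exists y.
  rewrite big1_seq; last by move=> y /andP [_ yF]; rewrite p0 // expr0n mulr0.
  by rewrite /QF big1_seq // => k /andP [_ kF]; rewrite p0 // mul0r.
set N := \sum_(k <- F) p k ^+ 2.
have Npos : 0 < N.
  apply: lt_le_trans (term_le_sum (f := fun k => p k ^+ 2) y0F uF (fun i => sqr_ge0 _)).
  by rewrite exprn_even_gt0.
have hq : forall y, y \in F -> p y != 0 -> Lam y <= QF a V eps F p / N.
  move=> y yF py.
  rewrite -(qform_QF a V eps uF hp) /N -(sqnorm_E uF hp).
  apply: Lambda_le => //.
    split.
      apply: sub_finite_set finphi => k /= nz; apply: contra nz => /eqP h.
      by rewrite /p /psi h mulr0.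
    move=> k /= nz; rewrite /ball_lat /=; apply: (@dist_lt x).
      by apply: contra nz => /eqP h; rewrite /p /psi h mul0r.
    by apply: contra py => /eqP h; rewrite /p /psi h mul0r.
  by apply/eqP => h; move: py; rewrite h eqxx.
apply: le_trans (_ : \sum_(y <- F) (QF a V eps F p / N) * p y ^+ 2 <= _).
  rewrite big_seq [X in _ <= X]big_seq; apply: ler_sum => y yF.
  case: (eqVneq (p y) 0) => [->|py]; first by rewrite expr0n !mulr0.
  by rewrite ler_wpM2r ?sqr_ge0 // hq.
by rewrite -mulr_sumr -/N divfK // gt_eqF.
Qed.

Lemma term_lb (x y b D c Q : R) : 0 <= D -> D <= 2 * c * Q ->
  - (c * (`|b| * Q) * (x ^+ 2 + y ^+ 2)) <= x * y * b * D.
Proof.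
move=> D0 hD.
have hxy1 : x * y <= (x ^+ 2 + y ^+ 2) / 2 by have := sqr_ge0 (x - y); lra.
have hxy2 : - ((x ^+ 2 + y ^+ 2) / 2) <= x * y by have := sqr_ge0 (x + y); lra.
have s0 : 0 <= (x ^+ 2 + y ^+ 2) / 2 by have := sqr_ge0 x; have := sqr_ge0 y; lra.
have h1 : - ((x ^+ 2 + y ^+ 2) / 2 * (`|b| * D)) <= x * y * b * D.
  rewrite -mulrA; case: (lerP 0 (b * D)) => hb.
    have -> : `|b| * D = b * D by rewrite -(ger0_norm hb) normrM (ger0_norm D0).
    have := ler_wpM2r hb hxy2; lra.
  have -> : `|b| * D = - (b * D) by rewrite -(ltr0_norm hb) normrM (ger0_norm D0).
  have := ler_wnM2r (ltW hb) hxy1; lra.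
have h2 : `|b| * D <= `|b| * (2 * c * Q) by rewrite ler_wpM2l.
have h3 : (x ^+ 2 + y ^+ 2) / 2 * (`|b| * D) <= (x ^+ 2 + y ^+ 2) / 2 * (`|b| * (2 * c * Q)).
  by rewrite ler_wpM2l.
have -> : c * (`|b| * Q) * (x ^+ 2 + y ^+ 2) = (x ^+ 2 + y ^+ 2) / 2 * (`|b| * (2 * c * Q)) by field.
lra.
Qed.

Lemma sumX_QF : \sum_(x <- X) QF a V eps F (psi phi x) =
  \sum_(k <- F) \sum_(j <- F) phi k * phi j * bb a eps (j - k) k * PP R L (j - k) +
  S * \sum_(k <- F) V (lpt eps k) * phi k ^+ 2.
Proof.
under eq_bigr do rewrite QF_split.
rewrite big_split /=; congr (_ + _).
  rewrite exchange_big /=; apply: eq_big_seq => k kF.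
  rewrite exchange_big /=; apply: eq_bigr => j _.
  rewrite -(Pid (k := k) j kF) mulr_sumr; apply: eq_bigr => x _; rewrite /psi; ring.
rewrite exchange_big /= mulr_sumr; apply: eq_big_seq => k kF.
have := Pid (k := k) k kF; rewrite subrr /S => <-.
by rewrite mulr_suml; apply: eq_bigr => x _; rewrite /psi; ring.
Qed.

Lemma sumX_lam : \sum_(x <- X) \sum_(y <- F) Lam y * psi phi x y ^+ 2 =
  S * \sum_(y <- F) Lam y * phi y ^+ 2.
Proof.
rewrite exchange_big /= mulr_sumr; apply: eq_big_seq => k kF.
have := Pid (k := k) k kF; rewrite subrr /S => <-.
by rewrite mulr_suml; apply: eq_bigr => x _; rewrite /psi; ring.
Qed.

Lemma E_eq : S * QF a V eps F phi =
  (\sum_(k <- F) \sum_(j <- F) phi k * phi j * bb a eps (j - k) k * PP R L (j - k) +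
  S * \sum_(k <- F) V (lpt eps k) * phi k ^+ 2) +
  \sum_(k <- F) \sum_(j <- F) phi k * phi j * bb a eps (j - k) k * (S - PP R L (j - k)).
Proof.
rewrite QF_split mulrDr.
have -> : S * (\sum_(k <- F) \sum_(j <- F) phi k * phi j * bb a eps (j - k) k) =
   \sum_(k <- F) \sum_(j <- F) phi k * phi j * bb a eps (j - k) k * PP R L (j - k) +
   \sum_(k <- F) \sum_(j <- F) phi k * phi j * bb a eps (j - k) k * (S - PP R L (j - k)).
  rewrite -big_split mulr_sumr; apply: eq_bigr => k _.
  rewrite -big_split mulr_sumr; apply: eq_bigr => j _ => /=; by rewrite mulrBr addrC subrK mulrC.
by rewrite addrAC.
Qed.

Variable A : R.
Hypothesis HA : forall (x : 'rV[R]_d) (M : seq Zd), uniq M ->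
  \sum_(m <- M) `|a m x eps| * qq R m <= A.
Hypothesis Hsym : forall m k : Zd, bb a eps m k = bb a eps (- m) (k + m).
Variable delta : R.
Hypothesis hLd : 2 * A <= delta * L%:R.

Let G (k j : Zd) := `|bb a eps (j - k) k| * qq R (j - k).

Lemma qq_opp (m : Zd) : qq R (- m) = qq R m.
Proof. by rewrite /qq; apply: eq_bigr => i _; rewrite mxE rmorphN sqrrN. Qed.

Lemma inner1 k : \sum_(j <- F) G k j <= A.
Proof.
have := HA (lpt eps k) (M := [seq j - k | j <- F]).
rewrite big_map map_inj_uniq // => [h|]; last by move=> u v /addIr.
exact: h.
Qed.

Lemma inner2 j : \sum_(k <- F) G k j <= A.
Proof.
have := HA (lpt eps j) (M := [seq k - j | k <- F]).
rewrite big_map map_inj_uniq // => [h|]; last by move=> u v /addIr.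
apply: le_trans (h uF); apply: ler_sum => k _; rewrite /G Hsym opprB.
by rewrite [k + (j - k)]addrC subrK -qq_opp opprB.
Qed.

Lemma E_lb : - (delta * S * \sum_(k <- F) phi k ^+ 2) <=
  \sum_(k <- F) \sum_(j <- F) phi k * phi j * bb a eps (j - k) k * (S - PP R L (j - k)).
Proof.
have Lpos : 0 < L%:R :> R by rewrite ltr0n.
set c := S / L%:R.
have c0 : 0 <= c by rewrite divr_ge0 // ltW // S_pos.
set N := \sum_(k <- F) phi k ^+ 2.
have N0 : 0 <= N by apply: sumr_ge0 => k _; apply: sqr_ge0.
apply: le_trans (_ : \sum_(k <- F) \sum_(j <- F) - (c * G k j * (phi k ^+ 2 + phi j ^+ 2)) <= _);
  last first.
  apply: ler_sum => k _; apply: ler_sum => j _; rewrite /G.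
  have [D0 hD] := PP_bounds R L (j - k).
  apply: term_lb => //.
  have -> : 2 * c * qq R (j - k) = (2 * S * qq R (j - k)) / L%:R.
    by rewrite /c; ring.
  by rewrite ler_pdivlMr // mulrC.
have e : \sum_(k <- F) \sum_(j <- F) (c * G k j * (phi k ^+ 2 + phi j ^+ 2)) =
  c * (\sum_(k <- F) phi k ^+ 2 * \sum_(j <- F) G k j +
       \sum_(j <- F) phi j ^+ 2 * \sum_(k <- F) G k j).
  have e1 : \sum_(k <- F) phi k ^+ 2 * \sum_(j <- F) G k j =
      \sum_(k <- F) \sum_(j <- F) G k j * phi k ^+ 2.
    by apply: eq_bigr => k _; rewrite mulr_sumr; apply: eq_bigr => j _; rewrite mulrC.
  have e2 : \sum_(j <- F) phi j ^+ 2 * \sum_(k <- F) G k j =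
      \sum_(k <- F) \sum_(j <- F) G k j * phi j ^+ 2.
    rewrite [RHS]exchange_big /=.
    by apply: eq_bigr => j _; rewrite mulr_sumr; apply: eq_bigr => k _; rewrite mulrC.
  rewrite e1 e2 -big_split mulr_sumr; apply: eq_bigr => k _.
  rewrite -big_split mulr_sumr; apply: eq_bigr => j _ /=; rewrite /G; ring.
have T1 : \sum_(k <- F) phi k ^+ 2 * \sum_(j <- F) G k j <= A * N.
  rewrite /N mulr_sumr; apply: ler_sum => k _; rewrite mulrC ler_wpM2r ?sqr_ge0 //.
  exact: inner1.
have T2 : \sum_(j <- F) phi j ^+ 2 * \sum_(k <- F) G k j <= A * N.
  rewrite /N mulr_sumr; apply: ler_sum => j _; rewrite mulrC ler_wpM2r ?sqr_ge0 //.
  exact: inner2.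
have -> : \sum_(k <- F) \sum_(j <- F) - (c * G k j * (phi k ^+ 2 + phi j ^+ 2)) =
   - (\sum_(k <- F) \sum_(j <- F) (c * G k j * (phi k ^+ 2 + phi j ^+ 2))).
  by rewrite -sumrN; apply: eq_bigr => k _; rewrite -sumrN.
rewrite e lerN2.
have hcA : c * (2 * A) <= delta * S.
  rewrite /c mulrAC ler_pdivrMr // [delta * S]mulrC -mulrA ler_wpM2l ?(ltW S_pos) //.
have : c * (\sum_(k <- F) phi k ^+ 2 * \sum_(j <- F) G k j +
       \sum_(j <- F) phi j ^+ 2 * \sum_(k <- F) G k j) <= c * (2 * A * N).
  by rewrite ler_wpM2l //; lra.
have : c * (2 * A) * N <= delta * S * N by rewrite ler_wpM2r.
rewrite mulrA; lra.
Qed.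

Lemma main_ineq : \sum_(y <- F) (Lam y - delta) * phi y ^+ 2 <= QF a V eps F phi.
Proof.
have hS := S_pos.
have h1 : S * \sum_(y <- F) Lam y * phi y ^+ 2 <= \sum_(x <- X) QF a V eps F (psi phi x).
  by rewrite -sumX_lam; apply: ler_sum => x _; exact: per_x.
have h2 := E_eq; have h3 := E_lb; rewrite -sumX_QF in h2.
have -> : \sum_(y <- F) (Lam y - delta) * phi y ^+ 2 =
   \sum_(y <- F) Lam y * phi y ^+ 2 - delta * \sum_(y <- F) phi y ^+ 2.
  by rewrite mulr_sumr -sumrB; apply: eq_bigr => y _; rewrite mulrBl.
rewrite -(ler_pM2l hS) mulrBr.
move: h1 h2 h3; set Q1 := QF _ _ _ _ _; set T := \sum_(x <- X) _.
set E := \sum_(k <- F) _; set U := \sum_(y <- F) _; set N := \sum_(y <- F) _.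
move=> h1 h2 h3.
have -> : S * (delta * N) = delta * S * N by rewrite mulrA [S * delta]mulrC.
lra.
Qed.

End Main.
Unset Implicit Arguments.
Theorem lemmaB2 (R : realType) (d : nat) (dpos : (0 < d)%N)
  (a0 a1 : 'rV[int]_d -> 'rV[R]_d -> R) (ra : 'rV[int]_d -> 'rV[R]_d -> R -> R)
  (eps0 : R) (V0 V1 : 'rV[R]_d -> R) (rv : 'rV[R]_d -> R -> R) :
  coef_hyp a0 a1 ra -> pot_hyp eps0 V0 V1 rv a0 ->
  forall eps : R, 0 < eps <= 1 -> eps <= eps0 ->
  forall delta : R, 0 < delta ->
  exists Rd : R, 0 < Rd /\
  forall r : R, Rd < r ->
  forall phi : 'rV[int]_d -> R, c0 [set: 'rV[int]_d] phi ->
    \sum_(k \in [set: 'rV[int]_d])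
       (LambdaR (coef a0 a1 ra) (pot V0 V1 rv eps) eps r k - delta) * phi k ^+ 2
    <= qform (coef a0 a1 ra) (pot V0 V1 rv eps) eps phi.
Proof.
move=> H1 H2 eps he heps0 delta hd.
have /andP [e0 e1] := he.
have [A [A0 HA]] := coefA H1 he.
have Hsym : forall m k : 'rV[int]_d,
    bb (coef a0 a1 ra) eps m k = bb (coef a0 a1 ra) eps (- m) (k + m).
  move=> m k; rewrite /bb.
  case: H1 => _ [_ [_ [_ [_ [Hs _]]]]].
  rewrite (Hs eps m (lpt eps k) he); congr (coef _ _ _ _ _ _).
  by apply/rowP => i; rewrite !mxE rmorphD /= mulrDr.
set L := (Num.Def.archi_bound (2 * A / delta)).+1.
have hL : 2 * A <= delta * L%:R.
  have h0 : 0 <= 2 * A / delta by rewrite divr_ge0 // ?mulr_ge0 // ltW.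
  have := archi_boundP h0; rewrite -/L => h.
  have hl : (Num.Def.archi_bound (2 * A / delta))%:R <= L%:R :> R by rewrite ler_nat.
  have h3 : 2 * A / delta <= L%:R by apply: ltW; exact: lt_le_trans h hl.
  have := ler_wpM2l (ltW hd) h3; by rewrite [delta * (_ / _)]mulrC divfK ?gt_eqF.
have L0 : (0 < L)%N by [].
exists (L%:R * eps * d%:R + 1); split.
  have : 0 <= L%:R * eps * d%:R by rewrite !mulr_ge0 ?ler0n // ltW.
  move=> h; lra.
move=> r hr phi [finphi _].
have hr' : L%:R * eps * d%:R < r by lra.
set F : seq 'rV[int]_d := finmap.enum_fset (fset_set [set k | phi k != 0]).
have uF : uniq F by apply: finmap.fset_uniq.
have hF : forall k, phi k != 0 -> k \in F.
  by move=> k nz; rewrite /F in_fset_set // inE.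
rewrite (fsumE (r := F)) //; last first.
  by move=> k nz; apply: hF; apply: contra nz => /eqP ->; rewrite expr0n mulr0.
rewrite (qform_QF (coef a0 a1 ra) (pot V0 V1 rv eps) eps uF hF).
exact: (main_ineq (pot V0 V1 rv eps) e0 uF L0 hr' hF finphi HA Hsym hL).
Qed.
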